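(* In the Hidden Hallucination algorithm described in the context, fix a phase $\ell$ and let $\Pi\subseteq\Pi_{\mathrm{mkv}}$ be any subset of policies. Suppose that the hallucinated ledger $\lambda_{\mathrm{hal},\ell}$ and the phase length $N_{\mathrm{ph}}>0$ satisfy \[\frac{1}{N_{\mathrm{ph}}}\le\frac{\Pr_{\mathrm{can}}[\mathcal{E}_{\mathrm{pun},\ell}\mid\lambda_{\mathrm{cens},\ell}]\cdot \mathrm{gap}_{\mathrm{can}}[\Pi\mid\lambda_{\mathrm{hal},\ell}]}{3H}.\] Then for $k=k_\ell$, any Bayes-greedy policy $\pi_k$ of agent $k$ lies in $\Pi$.
   Context: MDPs. Fix positive integers $S,A,H$. An MDP model $\mu$ specifies for each triple $(x,a,h)\in[S]\times[A]\times[H]$ a reward distribution $R_\mu(x,a,h)$ on $[0,1]$ (all supported on a common countable set) with mean $r_\mu(x,a,h)$, transition distribution $p_\mu(\cdot\mid x,a,h)$ on $[S]$ and initial distribution $p_\mu(\cdot\mid0)$; an episode produces a trajectory $(x_h,a_h,r_h,h)_{h\in[H]}$ in the usual way. $\Pi_{\mathrm{mkv}}$ is the set of deterministic Markov policies $\pi:[S]\times[H]\to[A]$; $V(\pi,\mu)=\mathsf{E}^\pi_\mu[\sum_h r_\mu(x_h,a_h,h)]$. Incentivized RL. A prior $\mathbf{p}$ over models is known to all; $\mu_\star\sim\mathbf{p}$. In episode $k$ the principal chooses a signal $\sigma_k$ via a known algorithm; agent $k$ selects a Bayes-greedy policy $\pi_k\in\arg\max_{\pi\in\Pi_{\mathrm{mkv}}}\mathbb{E}[V(\pi,\mu_\star)\mid\sigma_k]$;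 $\pi_k$ is run in $\mu_\star$, producing trajectory $\tau_k$ seen by the principal. Ledgers and canonical posteriors. A ledger $\lambda$ consists of a censoring set $\mathcal{U}_\lambda$ of triples and a sequence $(\pi_i,\tau_i)_{i=1}^m$ of policies and trajectories with rewards removed at stages $h$ with $(x_h,a_h,h)\in\mathcal{U}_\lambda$. $\Pr_{\mathrm{can}}[\cdot\mid\lambda,\mathcal{E}]$ (expectation $\mathbb{E}_{\mathrm{can}}$) is the conditional law of $\mu_\star$ given $\{\hat\lambda=\lambda\}\cap\mathcal{E}$, where $\mu_\star\sim\mathbf{p}$ and $\hat\lambda$ is obtained by running the fixed (non-random) policies $\pi_1,\dots,\pi_m$ once each, independently, in $\mu_\star$ and censoring rewards on $\mathcal{U}_\lambda$. The canonical gap of $\Pi\subseteq\Pi_{\mathrm{mkv}}$ given $\lambda$ is $\mathrm{gap}_{\mathrm{can}}[\Pi\mid\lambda]:=\max_{\pi\in\Pi}\mathbb{E}_{\mathrm{can}}[V(\pi,\mu_\star)\mid\lambda]-\max_{\pi\in\Pi_{\mathrm{mkv}}\setminus\Pi}\mathbb{E}_{\mathrm{can}}[V(\pi,\mu_\star)\mid\lambda]$. Algorithm (Hidden Hallucination), inputs $N_{\mathrm{ph}},n_{\mathrm{lrn}},\varepsilon_{\mathrm{pun}}$. Phase $\ell$ = episodes $(\ell-1)N_{\mathrm{ph}}+1,\dots,\ell N_{\mathrm{ph}}$; hallucination episode $k_\ell$ uniform in the phase. $\mathcal{U}_\ell$ = triples visited in fewer than $n_{\mathrm{lrn}}$ of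 the episodes $k_1,\dots,k_{\ell-1}$ (others fully explored). $\lambda_{\mathrm{cens},\ell}$: pairs $(\pi_{k_j},\tau_{k_j})_{j<\ell}$, all rewards removed; $\lambda_{\mathrm{hon},\ell}$: same pairs with censoring set $\mathcal{U}_\ell$. Punish event $\mathcal{E}_{\mathrm{pun},\ell}=\{r_{\mu_\star}(x,a,h)\le\varepsilon_{\mathrm{pun}}\ \forall(x,a,h)\notin\mathcal{U}_\ell\}$. At $k=k_\ell$: draw $\mu_{\mathrm{hal},\ell}$ from the posterior of $\mu_\star$ given $\lambda_{\mathrm{cens},\ell}$ and $\mathcal{E}_{\mathrm{pun},\ell}$; $\lambda_{\mathrm{hal},\ell}$ has censoring set $\mathcal{U}_\ell$ and each occurrence of a fully explored triple $(x,a,h)$ gets an independent reward from $R_{\mu_{\mathrm{hal},\ell}}(x,a,h)$. Signal: $\lambda_{\mathrm{hal},\ell}$ at $k=k_\ell$, $\lambda_{\mathrm{hon},\ell}$ at the other episodes of phase $\ell$. *)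

(* Defs.v *)
From HB Require Import structures.
From mathcomp Require Import all_boot all_order all_algebra.
From mathcomp Require Import all_classical all_reals all_analysis.
Set Implicit Arguments. Unset Strict Implicit. Unset Printing Implicit Defensive.
Import Order.TTheory GRing.Theory Num.Theory.
Local Open Scope ring_scope.
Local Open Scope classical_set_scope.

Section MDP.
Variables (R : realType) (S A H : nat).

Definition triple := ('I_S * 'I_A * 'I_H)%type.

Definition policy := {ffun 'I_S * 'I_H -> 'I_A}.

(* An MDP model: reward distributions (probability mass functions on R,
   supported on a common countable set C, see [valid_mdp]), transition
   distributions p(.|x,a,h) and the initial distribution p(.|0). *)
Record mdp := MDP {
  rewd  : 'I_S -> 'I_A -> 'I_H -> R -> R;
  trans : 'I_S -> 'I_A -> 'I_H -> 'I_S -> R;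
  init  : 'I_S -> R }.

Definition valid_mdp (C : set R) (m : mdp) : Prop :=
  [/\ (forall x a h r, 0 <= rewd m x a h r),
      (forall x a h r, ~ C r -> rewd m x a h r = 0),
      (forall x a h, (\esum_(r in C) (rewd m x a h r)%:E = 1)%E),
      (forall x a h y, 0 <= trans m x a h y) /\
        (forall x a h, \sum_(y : 'I_S) trans m x a h y = 1) &
      (forall x, 0 <= init m x) /\ \sum_(x : 'I_S) init m x = 1].

Definition rmean (C : set R) (m : mdp) x a h : R :=
  fine (\esum_(r in C) (rewd m x a h r * r)%:E)%E.

(* one stage of a recorded trajectory: (x_h, a_h, r_h) with r_h = None when
   the reward is removed (censored); the stage is the index h. *)
Definition step := ('I_S * 'I_A * option R)%type.
Definition traj := {ffun 'I_H -> step}.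
Definition saTraj := {ffun 'I_H -> 'I_S * 'I_A}.
Definition saOf (t : traj) : saTraj := [ffun h => (t h).1].

Definition initF (m : mdp) (sa : saTraj) : R :=
  if (insub 0%N : option 'I_H) is Some h0 then init m (sa h0).1 else 1.
Definition saLik (m : mdp) (pi : policy) (sa : saTraj) : R :=
  initF m sa * \prod_(h : 'I_H)
    ((pi ((sa h).1, h) == (sa h).2)%:R *
     (if (insub h.+1 : option 'I_H) is Some h' then
        trans m (sa h).1 (sa h).2 h (sa h').1 else 1)).

Definition rewE (m : mdp) (t : traj) : R :=
  \prod_(h : 'I_H)
    (if (t h).2 is Some r then rewd m (t h).1.1 (t h).1.2 h r else 1).

Definition value (C : set R) (m : mdp) (pi : policy) : R :=
  \sum_(xs : {ffun 'I_H -> 'I_S})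
    saLik m pi [ffun h => (xs h, pi (xs h, h))] *
    \sum_(h : 'I_H) rmean C m (xs h) (pi (xs h, h)) h.

(* Ledgers: a censoring set and a sequence of (policy, trajectory) pairs. *)
Definition ledger := ({set triple} * seq (policy * traj))%type.
Definition lU (l : ledger) : {set triple} := l.1.
Definition lent (l : ledger) : seq (policy * traj) := l.2.

Definition wf (l : ledger) : bool :=
  all (fun e : policy * traj =>
         [forall h : 'I_H, (((e.2 h).2 == None) ==
                            (((e.2 h).1.1, (e.2 h).1.2, h) \in lU l))])
      (lent l).

(* canonical likelihood Pr[hat lambda = l | mu_star = m] when the fixed
   policies of l are run once each, independently, and rewards censored on lU *)
Definition ledLik (m : mdp) (l : ledger) : R :=
  (wf l)%:R * \prod_(e <- lent l) (saLik m e.1 (saOf e.2) * rewE m e.2).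

Definition hist := seq (policy * saTraj).
Definition histOf (l : ledger) : hist := [seq (e.1, saOf e.2) | e <- lent l].

Definition censOf (hs : hist) : ledger :=
  (setTfor triple, [seq (e.1, [ffun h => (e.2 h, None)] : traj) | e : policy * saTraj <- hs]).

Definition visits (e : policy * saTraj) (t : triple) : bool :=
  [exists h : 'I_H, (h == t.2) && (e.2 h == (t.1.1, t.1.2))].

End MDP.

Section Canonical.
Variables (R : realType) (S A H : nat).
Variables (d : measure_display) (M : measurableType d) (P : probability M R).
Variables (C : set R) (mdl : M -> mdp R S A H).

Definition mdl_measurable : Prop :=
  [/\ (forall x a h r, measurable_fun setT (fun m => rewd (mdl m) x a h r)),
      (forall x a h y, measurable_fun setT (fun m => trans (mdl m) x a h y)) &
      (forall x, measurable_fun setT (fun m => init (mdl m) x))].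

Definition Vm (pi : policy S A H) (m : M) : R := value C (mdl m) pi.

Definition canE (f : M -> R) (E : set M) (l : ledger R S A H) : R :=
  fine (\int[P]_(m in E) (f m * ledLik (mdl m) l)%:E)%E /
  fine (\int[P]_(m in E) (ledLik (mdl m) l)%:E)%E.

Definition canPr (E : set M) (l : ledger R S A H) : R :=
  fine (\int[P]_(m in E) (ledLik (mdl m) l)%:E)%E /
  fine (\int[P]_(m in setT) (ledLik (mdl m) l)%:E)%E.

(* gap_can[Pi | l]; maxima over an empty set are -oo *)
Definition gap_can (Pi : {set policy S A H}) (l : ledger R S A H) : \bar R :=
  (\big[maxe/-oo]_(pi in Pi) (canE (Vm pi) setT l)%:E -
   \big[maxe/-oo]_(pi in ~: Pi) (canE (Vm pi) setT l)%:E)%E.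

Variables (N nl : nat) (eps : R).

Definition phaseOf (k : nat) : nat := (k.-1 %/ N).+1.

Definition Uset (hs : hist S A H) : {set triple S A H} :=
  [set t | (count (fun e => visits e t) hs < nl)%N].

Definition Epun (U : {set triple S A H}) : set M :=
  [set m | forall t, t \notin U -> rmean C (mdl m) t.1.1 t.1.2 t.2 <= eps].

(* Pr[lambda_hal = l | reward-free history hs of the previous hallucination
   episodes]: mu_hal ~ posterior given censOf hs and Epun, then every
   occurrence of an explored triple gets an independent reward from R_{mu_hal}. *)
Definition halP (hs : hist S A H) (l : ledger R S A H) : R :=
  ((histOf l == hs) && (lU l == Uset hs))%:R *
  (fine (\int[P]_(m in Epun (Uset hs)) (ledLik (mdl m) l)%:E)%E /
   fine (\int[P]_(m in Epun (Uset hs)) (ledLik (mdl m) (censOf R hs))%:E)%E).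

(* agents' (possibly randomized) policy selection: sel k l pi is the
   probability that agent k, receiving signal l, plays pi *)
Variable sel : nat -> ledger R S A H -> policy S A H -> R.

(* Pr[pi_{k_j} = pi | history before phase j]; k_j uniform in phase j *)
Definition chooseP (j : nat) (hs : hist S A H) (pi : policy S A H) : R :=
  N%:R^-1 * \sum_((j.-1 * N).+1 <= k < (j * N).+1)
     fine (\esum_(l in [set: ledger R S A H]) (halP hs l * sel k l pi)%:E)%E.

(* Pr[(pi_{k_j}, states/actions of tau_{k_j})_{j} = hs | mu_star = m] *)
Fixpoint histLikAux (m : M) (pre rest : hist S A H) : R :=
  match rest with
  | [::] => 1
  | e :: rest' => chooseP (size pre).+1 pre e.1 * saLik (mdl m) e.1 e.2 *
                  histLikAux m (rcons pre e) rest'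
  end.
Definition histLik (m : M) (hs : hist S A H) : R := histLikAux m [::] hs.

(* Pr[lambda_hon,l = lam | mu_star = m] *)
Definition honSigP (ph : nat) (lam : ledger R S A H) (m : M) : R :=
  ((size (lent lam) == ph.-1) && (lU lam == Uset (histOf lam)))%:R *
  histLik m (histOf lam) *
  ((wf lam)%:R * \prod_(e <- lent lam) rewE (mdl m) e.2).

(* Pr[lambda_hal,l = lam | mu_star = m] *)
Definition halSigP (ph : nat) (lam : ledger R S A H) (m : M) : R :=
  (size (lent lam) == ph.-1)%:R * histLik m (histOf lam) *
  halP (histOf lam) lam.

(* Pr[sigma_k = lam | mu_star = m] for an episode k of phase ph
   (k = k_ph with probability 1/N) *)
Definition sigLik (ph : nat) (lam : ledger R S A H) (m : M) : R :=
  (1 - N%:R^-1) * honSigP ph lam m + N%:R^-1 * halSigP ph lam m.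

Definition post (k : nat) (lam : ledger R S A H) (pi : policy S A H) : R :=
  fine (\int[P]_(m in setT) (Vm pi m * sigLik (phaseOf k) lam m)%:E)%E /
  fine (\int[P]_(m in setT) (sigLik (phaseOf k) lam m)%:E)%E.

Definition BG (k : nat) (lam : ledger R S A H) : {set policy S A H} :=
  [set pi | [forall pi', post k lam pi' <= post k lam pi]].

Definition bayes_greedy_sel : Prop :=
  [/\ (forall k l pi, 0 <= sel k l pi),
      (forall k l, \sum_(pi : policy S A H) sel k l pi = 1) &
      (forall k l pi, 0 < sel k l pi -> pi \in BG k l)].

End Canonical.

(* Main.v *)
Require Import Defs.
From HB Require Import structures.
From mathcomp Require Import all_boot all_order all_algebra.
From mathcomp Require Import all_classical all_reals all_analysis.
From mathcomp Require Import measurable_realfun.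
From mathcomp Require Import ring lra zify.
Import Order.TTheory GRing.Theory Num.Theory.
Local Open Scope ring_scope.
Local Open Scope classical_set_scope.

Set Implicit Arguments. Unset Strict Implicit. Unset Printing Implicit Defensive.

Section Bounds.
Variables (R : realType) (S A H : nat) (C : set R) (m : mdp R S A H).
Hypothesis hv : valid_mdp C m.

Lemma rewd_ge0 x a h r : 0 <= rewd m x a h r.
Proof. by case: hv. Qed.

Lemma rewd_le1 x a h r : rewd m x a h r <= 1.
Proof.
case: hv => r0 rC rs _ _.
have [Cr|nCr] := pselect (C r); last by rewrite rC.
rewrite -lee_fin -(rs x a h); apply: esum_ge; exists [set r].
  by split; [exact: finite_set1| move=> y ->].
by rewrite fsbig_set1.
Qed.

Lemma sum_le1_elem (T : finType) (F : T -> R) y :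
  (forall x, 0 <= F x) -> \sum_x F x = 1 -> F y <= 1.
Proof.
move=> F0 F1; rewrite -F1 (bigD1 y) //= lerDl; exact: sumr_ge0.
Qed.

Lemma trans_ge0 x a h y : 0 <= trans m x a h y.
Proof. by case: hv => _ _ _ []. Qed.
Lemma trans_le1 x a h y : trans m x a h y <= 1.
Proof. case: hv => _ _ _ [t0 t1] _; apply: sum_le1_elem => //; exact: t1. Qed.
Lemma init_ge0 x : 0 <= init m x.
Proof. by case: hv => _ _ _ _ []. Qed.
Lemma init_le1 x : init m x <= 1.
Proof. case: hv => _ _ _ _ [i0 i1]; exact: sum_le1_elem. Qed.

Lemma initF_01 sa : 0 <= initF m sa <= 1.
Proof. rewrite /initF; case: insubP => [h0 _ _|_]; by rewrite ?init_ge0 ?init_le1 ?ler01 ?lexx. Qed.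

Lemma saLik_01 pi sa : 0 <= saLik m pi sa <= 1.
Proof.
rewrite /saLik; have /andP[i0 i1] := initF_01 sa.
pose F := fun h : 'I_H => ((pi ((sa h).1, h) == (sa h).2)%:R *
     (if (insub h.+1 : option 'I_H) is Some h' then
        trans m (sa h).1 (sa h).2 h (sa h').1 else 1)).
change (0 <= initF m sa * \prod_h F h <= 1).
have hp : forall h : 'I_H, 0 <= F h <= 1.
  move=> h; rewrite /F; case: (_ == _); rewrite ?mul0r ?lexx ?ler01 // mul1r.
  by case: insubP => [h' _ _|_]; rewrite ?trans_ge0 ?trans_le1 ?lexx ?ler01.
have p0 : 0 <= \prod_h F h by apply: prodr_ge0 => h _; case/andP: (hp h).
have p1 : \prod_h F h <= 1 by apply: prodr_ile1 => h _; exact: hp.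
apply/andP; split; first exact: mulr_ge0.
by rewrite -[X in _ <= X](mulr1 1); exact: ler_pM.
Qed.

Lemma rewE_01 t : 0 <= rewE m t <= 1.
Proof.
rewrite /rewE; apply/andP; split.
  by apply: prodr_ge0 => h _; case: (t h).2 => [r|]; rewrite ?rewd_ge0 ?ler01.
by apply: prodr_ile1 => h _; case: (t h).2 => [r|]; rewrite ?rewd_ge0 ?rewd_le1 ?lexx ?ler01.
Qed.

Lemma ledLik_01 l : 0 <= ledLik m l <= 1.
Proof.
rewrite /ledLik.
have hp : forall e : policy S A H * traj R S A H, 0 <= saLik m e.1 (saOf e.2) * rewE m e.2 <= 1.
  move=> e; have /andP[a0 a1] := saLik_01 e.1 (saOf e.2); have /andP[b0 b1] := rewE_01 e.2.
  apply/andP; split; first exact: mulr_ge0.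
  by rewrite -[X in _ <= X](mulr1 1); exact: ler_pM.
case: (wf l); rewrite ?mul0r ?lexx ?ler01 // mul1r.
apply/andP; split; first by apply: prodr_ge0 => e _; case/andP: (hp e).
by apply: prodr_ile1 => e _; exact: hp.
Qed.

Lemma rmean_01 x a h : C `<=` [set r | 0 <= r <= 1] -> 0 <= rmean C m x a h <= 1.
Proof.
move=> hC; case: hv => r0 rC rs _ _; rewrite /rmean.
have e0 : (0 <= \esum_(r in C) (rewd m x a h r * r)%:E)%E.
  apply: esum_ge0 => r Cr; rewrite lee_fin mulr_ge0 ?r0 //.
  by have /andP[] := hC _ Cr.
have e1 : (\esum_(r in C) (rewd m x a h r * r)%:E <= 1)%E.
  rewrite -(rs x a h); apply: le_esum => r Cr; rewrite lee_fin.
  have /andP[? ?] := hC _ Cr; rewrite -[X in _ <= X]mulr1; apply: ler_pM => //; exact: r0.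
apply/andP; split; first exact: fine_ge0.
by rewrite -lee_fin fineK ?e1 // ge0_fin_numE // (le_lt_trans e1) // ltry.
Qed.

End Bounds.

Local Open Scope classical_set_scope.

Section Chain.
Variable (R : realType).

Definition consF (T : finType) k (x : T) (ys : {ffun 'I_k -> T}) : {ffun 'I_k.+1 -> T} :=
  [ffun i : 'I_k.+1 => if unlift ord0 i is Some j then ys j else x].

Lemma consF0 (T : finType) k (x : T) (ys : {ffun 'I_k -> T}) : consF x ys ord0 = x.
Proof. by rewrite ffunE unlift_none. Qed.
Lemma consFS (T : finType) k (x : T) (ys : {ffun 'I_k -> T}) (j : 'I_k) : consF x ys (lift ord0 j) = ys j.
Proof. by rewrite ffunE liftK. Qed.

Lemma sum_ffunS (T : finType) k (F : {ffun 'I_k.+1 -> T} -> R) :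
  \sum_xs F xs = \sum_(x : T) \sum_(ys : {ffun 'I_k -> T}) F (consF x ys).
Proof.
rewrite pair_big /= (reindex (fun p : T * {ffun 'I_k -> T} => consF p.1 p.2)) //.
exists (fun xs : {ffun 'I_k.+1 -> T} => (xs ord0, [ffun j : 'I_k => xs (lift ord0 j)])) => [[x ys] _|xs _] /=.
  rewrite consF0; congr pair; apply/ffunP => j; by rewrite ffunE consFS.
apply/ffunP => i; rewrite ffunE; case: unliftP => [j ->|->] //.
by rewrite ffunE.
Qed.

Lemma chain_sum (T : finType) (k : nat) (a : T -> R) (Tr : 'I_k -> T -> T -> R) :
  (forall i x, \sum_y Tr i x y = 1) ->
  \sum_(xs : {ffun 'I_k.+1 -> T}) a (xs ord0) *
     \prod_(i < k) Tr i (xs (widen_ord (leqnSn k) i)) (xs (lift ord0 i))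
  = \sum_x a x.
Proof.
elim: k a Tr => [|k IH] a Tr hT.
  rewrite sum_ffunS; apply: eq_bigr => x _.
  under eq_bigr do rewrite big_ord0 mulr1 consF0.
  rewrite big_const card_ffun !card_ord expn0 /=; by rewrite addr0.
rewrite sum_ffunS.
have E : forall x (ys : {ffun 'I_k.+1 -> T}),
  a (consF x ys ord0) * \prod_(i < k.+1)
     Tr i (consF x ys (widen_ord (leqnSn k.+1) i)) (consF x ys (lift ord0 i))
  = (a x * Tr ord0 x (ys ord0)) *
    \prod_(j < k) Tr (lift ord0 j) (ys (widen_ord (leqnSn k) j)) (ys (lift ord0 j)).
  move=> x ys; rewrite big_ord_recl consF0 mulrA; congr (_ * _ * _).
    by rewrite (_ : widen_ord _ ord0 = ord0) ?consF0 ?consFS //; apply: val_inj.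
  apply: eq_bigr => j _.
  rewrite (_ : widen_ord (leqnSn k.+1) (lift ord0 j) = lift ord0 (widen_ord (leqnSn k) j)); last first.
    by apply: val_inj; rewrite /= /bump /=.
  by rewrite !consFS.
under eq_bigr do under eq_bigr do rewrite E.
rewrite exchange_big /=.
under eq_bigr do rewrite -mulr_suml.
rewrite (IH (fun y => \sum_x a x * Tr ord0 x y) (fun j => Tr (lift ord0 j))) //.
rewrite exchange_big /=; apply: eq_bigr => x _.
by rewrite -mulr_sumr hT mulr1.
Qed.

End Chain.

Lemma saLik_path (R : realType) (S A k : nat) (m : mdp R S A k.+1) (pi : policy S A k.+1)
  (xs : {ffun 'I_k.+1 -> 'I_S}) :
  saLik m pi [ffun h => (xs h, pi (xs h, h))] =
  init m (xs ord0) * \prod_(i < k) trans m (xs (widen_ord (leqnSn k) i))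
       (pi (xs (widen_ord (leqnSn k) i), widen_ord (leqnSn k) i)) (widen_ord (leqnSn k) i) (xs (lift ord0 i)).
Proof.
rewrite /saLik /initF; congr (_ * _).
  case: insubP => [h0 _ h0v|] /=; last by [].
  by rewrite ffunE (_ : h0 = ord0) //; apply: val_inj.
rewrite big_ord_recr /= ffunE /= eqxx mul1r.
case: insubP => [h' hlt _|_]; first by move: hlt; rewrite /= ltnn.
rewrite mulr1; apply: eq_bigr => i _; rewrite !ffunE eqxx mul1r /=.
case: insubP => [h' _ hv|]; last by rewrite /= ltnS ltn_ord.
by rewrite ffunE (_ : h' = lift ord0 i) //; apply: val_inj; rewrite hv /= /bump /=.
Qed.

Lemma saLik_sum1 (R : realType) (S A H : nat) (C : set R) (m : mdp R S A H) (pi : policy S A H) :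
  valid_mdp C m -> (0 < H)%N ->
  \sum_(xs : {ffun 'I_H -> 'I_S}) saLik m pi [ffun h => (xs h, pi (xs h, h))] = 1.
Proof.
case: H m pi => // k m pi hv _.
under eq_bigr do rewrite saLik_path.
rewrite (@chain_sum R _ _ (fun x => init m x)
   (fun i x y => trans m x (pi (x, widen_ord (leqnSn k) i)) (widen_ord (leqnSn k) i) y)).
  by case: hv => _ _ _ _ [].
by move=> i x; case: hv => _ _ _ [_ ->].
Qed.


Section Meas.
Variables (R : realType) (S A H : nat).
Variables (d : measure_display) (M : measurableType d).
Variables (C : set R) (mdl : M -> mdp R S A H).
Hypothesis hmeas : mdl_measurable mdl.
Hypothesis hC : countable C.
Hypothesis hC01 : C `<=` [set r | 0 <= r <= 1].
Hypothesis hvalid : forall m, valid_mdp C (mdl m).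

Local Notation mM := measurable_realfun.measurable_funM.

Lemma meas_mulc (c : R) (f : M -> R) : measurable_fun setT f -> measurable_fun setT (fun m => c * f m).
Proof. by move=> mf; exact: (mM (measurable_cst c) mf). Qed.

Lemma meas_saLik pi sa : measurable_fun setT (fun m => saLik (mdl m) pi sa).
Proof.
case: hmeas => mr mt mi; rewrite /saLik.
have m1 : measurable_fun setT (fun m => initF (mdl m) sa).
  rewrite /initF; case: insubP => [h0 _ _|_]; [exact: mi|exact: measurable_cst].
have m2 : measurable_fun setT (fun m => \prod_h ((pi ((sa h).1, h) == (sa h).2)%:R *
     (if (insub h.+1 : option 'I_H) is Some h' then
        trans (mdl m) (sa h).1 (sa h).2 h (sa h').1 else 1))).
  apply: measurable_prod => h _; apply: meas_mulc.
  case: insubP => [h' _ _|_]; [exact: mt|exact: measurable_cst].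
exact: (mM m1 m2).
Qed.

Lemma meas_rewE t : measurable_fun setT (fun m => rewE (mdl m) t).
Proof.
case: hmeas => mr mt mi; rewrite /rewE.
apply: measurable_prod => h _; case: (t h).2 => [r|]; [exact: mr|exact: measurable_cst].
Qed.

Lemma meas_ledLik l : measurable_fun setT (fun m => ledLik (mdl m) l).
Proof.
rewrite /ledLik; apply: meas_mulc; apply: measurable_prod => e _.
exact: (mM (meas_saLik _ _) (meas_rewE _)).
Qed.

Lemma meas_rmean x a h : measurable_fun setT (fun m => rmean C (mdl m) x a h).
Proof.
case: hmeas => mr mt mi.
have /countable_injP[f finj] := hC.
pose P : pred nat := fun n => `[< exists2 r, C r & f r = n >].
pose e : nat -> R := fun n => xget 0 [set r | C r /\ f r = n].
have eP : forall n, P n -> C (e n) /\ f (e n) = n.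
  move=> n /asboolP[r Cr frn].
  have := @xgetPex _ (0:R) [set r | C r /\ f r = n] (ex_intro _ r (conj Cr frn)).
  by [].
have Ce : C = e @` [set n | P n].
  apply/seteqP; split => [r Cr|_ [n Pn <-]]; last by case: (eP n Pn).
  have Pn : P (f r) by apply/asboolP; exists r.
  exists (f r) => //; case: (eP _ Pn) => Ce fe; apply: finj => //; rewrite inE //.
have einj : set_inj [set n | P n] e.
  by move=> n1 n2 /set_mem P1 /set_mem P2 ee; case: (eP _ P1) => _ <-; case: (eP _ P2) => _ <-; rewrite ee.
have E : forall m, rmean C (mdl m) x a h =
   fine (\sum_(i <oo | i \in P) (rewd (mdl m) x a h (e i) * e i)%:E)%E.
  move=> m; rewrite /rmean; congr fine.
  rewrite Ce esum_image // nneseries_esum //.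
  move=> n Pn; case: (eP n Pn) => Cn _; rewrite lee_fin mulr_ge0 //.
    by case: (hvalid m).
  by have /andP[] := hC01 Cn.
under eq_fun do rewrite E.
suff hs : measurable_fun setT (fun m => \sum_(i <oo | i \in P) (rewd (mdl m) x a h (e i) * e i)%:E)%E.
  exact: (measurableT_comp (@fine_measurable R setT measurableT) hs).
apply: ge0_emeasurable_sum.
  move=> k m _ Pk; case: (eP k Pk) => Ck _; rewrite lee_fin mulr_ge0 //.
    by case: (hvalid m).
  by have /andP[] := hC01 Ck.
move=> k _; apply/measurable_EFinP.
exact: (mM (mr x a h (e k)) (measurable_cst (e k))).
Qed.

Lemma meas_Vm pi : measurable_fun setT (Vm C mdl pi).
Proof.
rewrite /Vm /value; apply: measurable_sum => xs.
apply: (mM (meas_saLik _ _)).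
apply: measurable_sum => h; exact: meas_rmean.
Qed.

End Meas.


Lemma value_0H (R : realType) (S A H : nat) (C : set R) (m : mdp R S A H) (pi : policy S A H) :
  valid_mdp C m -> C `<=` [set r | 0 <= r <= 1] -> (0 < H)%N ->
  0 <= value C m pi <= H%:R.
Proof.
move=> hv hC hH; rewrite /value.
have G01 : forall xs : {ffun 'I_H -> 'I_S},
    0 <= \sum_h rmean C m (xs h) (pi (xs h, h)) h <= H%:R.
  move=> xs; apply/andP; split.
    by apply: sumr_ge0 => h _; case/andP: (@rmean_01 _ _ _ _ _ _ hv (xs h) (pi (xs h, h)) h hC).
  have -> : (H%:R : R) = \sum_(h : 'I_H) 1 by rewrite sumr_const card_ord.
  apply: ler_sum => h _.
  by case/andP: (@rmean_01 _ _ _ _ _ _ hv (xs h) (pi (xs h, h)) h hC).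
apply/andP; split.
  apply: sumr_ge0 => xs _; apply: mulr_ge0.
    by case/andP: (@saLik_01 _ _ _ _ _ _ hv pi [ffun h => (xs h, pi (xs h, h))]).
  by case/andP: (G01 xs).
apply: (@le_trans _ _ (\sum_(xs : {ffun 'I_H -> 'I_S}) saLik m pi [ffun h => (xs h, pi (xs h, h))] * H%:R)).
  apply: ler_sum => xs _; apply: ler_wpM2l.
    by case/andP: (@saLik_01 _ _ _ _ _ _ hv pi [ffun h => (xs h, pi (xs h, h))]).
  by case/andP: (G01 xs).
by rewrite -mulr_suml (saLik_sum1 _ hv hH) mul1r.
Qed.


Section Fact.
Variables (R : realType) (S A H : nat).
Variables (d : measure_display) (M : measurableType d) (P : probability M R).
Variables (C : set R) (mdl : M -> mdp R S A H).
Variables (N nl : nat) (eps : R) (sel : nat -> ledger R S A H -> policy S A H -> R).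

Fixpoint cAux (pre rest : hist S A H) : R :=
  match rest with
  | [::] => 1
  | e :: rest' => Defs.chooseP P C mdl N nl eps sel (size pre).+1 pre e.1 * cAux (rcons pre e) rest'
  end.

Lemma histLikAux_fact m pre rest :
  histLikAux P C mdl N nl eps sel m pre rest =
  cAux pre rest * \prod_(e <- rest) saLik (mdl m) e.1 e.2.
Proof.
elim: rest pre => [|e r IH] pre /=; first by rewrite big_nil mulr1.
by rewrite IH big_cons; ring.
Qed.

Lemma ledLik_cens (m : mdp R S A H) (hs : hist S A H) :
  ledLik m (censOf R hs) = \prod_(e <- hs) saLik m e.1 e.2.
Proof.
rewrite /ledLik.
have -> : wf (censOf R hs).
  apply/allP => e /mapP [e' _ ->]; apply/forallP => h /=.
  by rewrite ffunE /= finset.in_setT.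
rewrite mul1r /censOf /lent /= big_map; apply: eq_bigr => e _ /=.
have -> : saOf ([ffun h => (e.2 h, None)] : traj R S A H) = e.2.
  by apply/ffunP => h; rewrite !ffunE.
rewrite /rewE (eq_bigr (fun=> 1)) ?big1_eq ?mulr1 // => h _.
by rewrite ffunE.
Qed.

Lemma ledLik_split (m : mdp R S A H) (l : ledger R S A H) :
  ledLik m l = ledLik m (censOf R (histOf l)) *
     ((wf l)%:R * \prod_(e <- lent l) rewE m e.2).
Proof.
rewrite ledLik_cens /ledLik /histOf big_map big_split /=; ring.
Qed.

End Fact.


Section Integ.
Variables (R : realType) (d : measure_display) (M : measurableType d) (P : probability M R).

Lemma int_bdd (f : M -> R) (K : R) : measurable_fun setT f ->
  (forall m, `|f m| <= K) -> P.-integrable setT (EFin \o f).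
Proof.
move=> mf fK; apply: measurable_bounded_integrable => //.
  by rewrite [X in (X < _)%E](_ : _ = 1%E) ?ltry //; exact: probability_setT.
exists K; split; first exact: num_real.
move=> x Kx y _ /=; apply: le_trans (fK y) _; exact: ltW.
Qed.

Lemma int_sub_le (E : set M) (f : M -> R) : (forall m, 0 <= f m) ->
  (\int[P]_(m in E) (f m)%:E <= \int[P]_(m in setT) (f m)%:E)%E.
Proof.
move=> f0; rewrite ge0_integralE; last by move=> x _; rewrite lee_fin.
rewrite ge0_integralE; last by move=> x _; rewrite lee_fin.
apply: le_ereal_sup => _ [h hf <-]; exists h => // x.
apply: le_trans (hf x) _; rewrite patch_setT /patch; case: ifP => _ //.
by rewrite lee_fin.
Qed.

Lemma int_ge0 (E : set M) (f : M -> R) : (forall m, 0 <= f m) ->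
  (0 <= \int[P]_(m in E) (f m)%:E)%E.
Proof. by move=> f0; apply: integral_ge0 => x _; rewrite lee_fin. Qed.

Lemma fine_sub_le (E : set M) (f : M -> R) : (forall m, 0 <= f m) ->
  P.-integrable setT (EFin \o f) ->
  0 <= fine (\int[P]_(m in E) (f m)%:E) <= fine (\int[P]_(m in setT) (f m)%:E).
Proof.
move=> f0 fi; have h1 := int_sub_le E f0; have h0 := int_ge0 E f0.
have fT : (\int[P]_(m in setT) (f m)%:E)%E \is a fin_num.
  exact: (integrable_fin_num measurableT fi).
apply/andP; split; first exact: fine_ge0.
have h2 : (0 <= \int[P]_(m in setT) (f m)%:E)%E := le_trans h0 h1.
have fE : (\int[P]_(m in E) (f m)%:E)%E \is a fin_num.
  rewrite ge0_fin_numE //; apply: (le_lt_trans h1); by rewrite -ge0_fin_numE.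
exact: fine_le.
Qed.

End Integ.


Section Endgame.
Variable R : realType.

Lemma end1 (p w Hh : R) : 0 < p -> p <= 1 -> w <= Hh -> 0 < Hh ->
  1 <= p * w / (3 * Hh) -> False.
Proof.
move=> p0 p1 wH H0; rewrite ler_pdivlMr ?mul1r; last by nra.
move=> h; nra.
Qed.

Lemma end2 (n ZEl Zl ZEc Zc Hh w : R) :
  0 < n -> n <= 2^-1 -> 0 < ZEl -> ZEl <= Zl -> 0 < ZEc -> ZEc <= Zc -> 0 < Hh ->
  w <= n * (ZEl / ZEc) * Hh * Zc / ((1 - n) * Zl) ->
  n <= ZEc / Zc * w / (3 * Hh) -> False.
Proof.
move=> n0 n2 El0 ElL Ec0 EcC H0 wb hg.
have Zl0 : 0 < Zl by lra.
have Zc0 : 0 < Zc by lra.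
have n1 : 0 < 1 - n by lra.
have q0 : 0 < ZEc / Zc by apply: divr_gt0.
move: hg; rewrite ler_pdivlMr; last by nra.
move=> hg.
have hw : ZEc / Zc * w <= n * ZEl * Hh / ((1 - n) * Zl).
  apply: (le_trans (ler_wpM2l (ltW q0) wb)).
  rewrite le_eqVlt; apply/orP; left; apply/eqP; field.
  by rewrite !gt_eqF.
have := le_trans hg hw; rewrite ler_pdivlMr; last by nra.
move=> h.
have nH : 0 < n * Hh by apply: mulr_gt0.
have h2 : n * Hh * ZEl <= n * Hh * Zl by rewrite ler_pM2l.
have : 3 * (1 - n) * (n * Hh * Zl) <= 1 * (n * Hh * Zl).
  have e1 : 3 * (1 - n) * (n * Hh * Zl) = n * (3 * Hh) * ((1 - n) * Zl) by ring.
  have e2 : n * ZEl * Hh = n * Hh * ZEl by ring.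
  rewrite mul1r e1; apply: (le_trans h); rewrite e2; exact: h2.
rewrite ler_pM2r; last by apply: mulr_gt0.
lra.
Qed.

Lemma step_bound (n r cH Ap Aq Bp Bq Hh Zc Zl : R) :
  0 < n -> n < 1 -> 0 < cH -> 0 <= r -> 0 < Zl -> 0 <= Bp -> Bq <= Hh * Zc ->
  (1 - n) * cH * Ap + n * cH * r * Bp <= (1 - n) * cH * Aq + n * cH * r * Bq ->
  Ap / Zl <= Aq / Zl + n * r * Hh * Zc / ((1 - n) * Zl).
Proof.
move=> n0 n1 c0 r0 Zl0 Bp0 BqH h.
have n1' : 0 < 1 - n by lra.
have h1 : (1 - n) * Ap + n * r * Bp <= (1 - n) * Aq + n * r * Bq.
  have e1 : (1 - n) * cH * Ap + n * cH * r * Bp = cH * ((1 - n) * Ap + n * r * Bp) by ring.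
  have e2 : (1 - n) * cH * Aq + n * cH * r * Bq = cH * ((1 - n) * Aq + n * r * Bq) by ring.
  by rewrite e1 e2 ler_pM2l in h.
have nr0 : 0 <= n * r by apply: mulr_ge0 => //; exact: ltW.
have h2 : n * r * Bq <= n * r * (Hh * Zc) by apply: ler_wpM2l.
have h3 : 0 <= n * r * Bp by apply: mulr_ge0.
have h4 : (1 - n) * Ap <= (1 - n) * Aq + n * r * Hh * Zc.
  have -> : n * r * Hh * Zc = n * r * (Hh * Zc) by ring.
  lra.
have -> : Aq / Zl + n * r * Hh * Zc / ((1 - n) * Zl) =
   ((1 - n) * Aq + n * r * Hh * Zc) / ((1 - n) * Zl).
  by field; rewrite !gt_eqF.
rewrite ler_pdivlMr ?mulr_gt0 // mulrCA divfK ?gt_eqF // mulrC.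
Qed.

End Endgame.

Unset Implicit Arguments. Set Strict Implicit.

Theorem proposition1 (R : realType) (S A H : nat)
  (d : measure_display) (M : measurableType d) (P : probability M R)
  (C : set R) (mdl : M -> mdp R S A H)
  (HS : (0 < S)%N) (HA : (0 < A)%N) (HH : (0 < H)%N)
  (hC : countable C) (hC01 : C `<=` [set r | 0 <= r <= 1])
  (hvalid : forall m, valid_mdp C (mdl m))
  (hmeas : mdl_measurable mdl)
  (N nl : nat) (eps : R) (hN : (0 < N)%N)
  (sel : nat -> ledger R S A H -> policy S A H -> R)
  (hsel : bayes_greedy_sel P C mdl N nl eps sel)
  (l k : nat) (hl : (0 < l)%N) (hk : (l.-1 * N < k <= l * N)%N)
  (Pi : {set policy S A H}) (lam : ledger R S A H)
  (hreal : 0 < fine (\int[P]_(m in setT)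
                      (halSigP P C mdl N nl eps sel l lam m)%:E)%E)
  (hgap : (((N%:R)^-1)%:E <=
          (canPr P mdl (Epun C mdl eps (Uset nl (histOf lam)))
                 (censOf R (histOf lam)))%:E
          * gap_can P C mdl Pi lam * (((3 * H)%:R)^-1)%:E)%E) :
  forall pi, pi \in BG P C mdl N nl eps sel k lam -> pi \in Pi.
Proof.
move=> pi hpi; apply/negPn/negP => hnot.
set hs := histOf lam.
set cens := censOf R hs.
set U := Uset nl hs.
set E := Epun C mdl eps U.
pose Ll := fun m => ledLik (mdl m) lam.
pose Lc := fun m => ledLik (mdl m) cens.
pose cH := cAux P C mdl N nl eps sel [::] hs.
pose hP := halP P C mdl nl eps hs lam.
pose n := (N%:R : R)^-1.
have Ll01 : forall m, 0 <= Ll m <= 1 := fun m => @ledLik_01 R S A H C (mdl m) (hvalid m) lam.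
have Lc01 : forall m, 0 <= Lc m <= 1 := fun m => @ledLik_01 R S A H C (mdl m) (hvalid m) cens.
have V0H : forall pi m, 0 <= Vm C mdl pi m <= H%:R :=
  fun pi m => value_0H pi (hvalid m) hC01 HH.
have mLl : measurable_fun setT Ll := meas_ledLik hmeas lam.
have mLc : measurable_fun setT Lc := meas_ledLik hmeas cens.
have mV : forall pi, measurable_fun setT (Vm C mdl pi) := meas_Vm hmeas hC hC01 hvalid.
have nrm : forall x y : R, 0 <= x <= y -> `|x| <= y.
  by move=> x y /andP[x0 xy]; rewrite ger0_norm.
have iZ : forall (c : R) (f : M -> R) K, measurable_fun setT f -> (forall m, 0 <= f m <= K) ->
    P.-integrable setT (EFin \o (fun m => c * f m)).
  move=> c f K mf fK; apply: (@int_bdd _ _ _ P _ (`|c| * K)).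
    exact: (measurable_funM (measurable_cst c) mf).
  move=> m; rewrite normrM; apply: ler_wpM2l => //; exact: nrm.
have iLl : P.-integrable setT (EFin \o Ll).
  apply: (@int_bdd _ _ _ P _ 1) => // m; exact: nrm.
have iLc : P.-integrable setT (EFin \o Lc).
  apply: (@int_bdd _ _ _ P _ 1) => // m; exact: nrm.
have VL0H : forall pi (L : M -> R), (forall m, 0 <= L m <= 1) ->
   forall m, 0 <= Vm C mdl pi m * L m <= H%:R.
  move=> pi' L L01 m; have /andP[v0 v1] := V0H pi' m; have /andP[l0 l1] := L01 m.
  apply/andP; split; first exact: mulr_ge0.
  by rewrite -[X in _ <= X]mulr1; apply: ler_pM.
have mVL : forall pi (L : M -> R), measurable_fun setT L -> measurable_fun setT (fun m => Vm C mdl pi m * L m).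
  by move=> pi' L mL; exact: (measurable_funM (mV pi') mL).
have iVLl : forall pi, P.-integrable setT (EFin \o (fun m => Vm C mdl pi m * Ll m)).
  move=> pi'; apply: (@int_bdd _ _ _ P _ H%:R); first exact: mVL.
  move=> m; apply: nrm; exact: VL0H.
have iVLc : forall pi, P.-integrable setT (EFin \o (fun m => Vm C mdl pi m * Lc m)).
  move=> pi'; apply: (@int_bdd _ _ _ P _ H%:R); first exact: mVL.
  move=> m; apply: nrm; exact: VL0H.
have hist : forall m, histLik P C mdl N nl eps sel m hs = cH * Lc m.
  by move=> m; rewrite /histLik histLikAux_fact /Lc /cens ledLik_cens.
set b0 := (size (lent lam) == l.-1).
set b2 := (lU lam == U).
have honE : forall m, honSigP P C mdl N nl eps sel l lam m = (b0 && b2)%:R * cH * Ll m.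
  move=> m; rewrite /honSigP -/hs -/U -/b0 -/b2 hist /Ll (ledLik_split (mdl m) lam) -/hs -/cens -/(Lc m).
  ring.
have halE : forall m, halSigP P C mdl N nl eps sel l lam m = b0%:R * cH * hP * Lc m.
  move=> m; rewrite /halSigP -/hs -/b0 hist -/hP; ring.
have phase : phaseOf N k = l.
  rewrite /phaseOf; case/andP: hk => h1 h2; nia.
pose al := (1 - n) * ((b0 && b2)%:R * cH).
pose be := n * (b0%:R * cH * hP).
have sigE : forall m, sigLik P C mdl N nl eps sel (phaseOf N k) lam m = al * Ll m + be * Lc m.
  by move=> m; rewrite phase /sigLik honE halE /al /be /n; ring.
pose Af := fun pi => Rintegral P setT (fun m => Vm C mdl pi m * Ll m).
pose Bf := fun pi => Rintegral P setT (fun m => Vm C mdl pi m * Lc m).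
pose Zl := Rintegral P setT Ll.
pose Zc := Rintegral P setT Lc.
have postE : forall pi, post P C mdl N nl eps sel k lam pi = (al * Af pi + be * Bf pi) / (al * Zl + be * Zc).
  move=> pi'.
  rewrite (_ : post P C mdl N nl eps sel k lam pi' =
     Rintegral P setT (fun m => Vm C mdl pi' m * sigLik P C mdl N nl eps sel (phaseOf N k) lam m) /
          Rintegral P setT (fun m => sigLik P C mdl N nl eps sel (phaseOf N k) lam m)) //.
  have e : forall m, Vm C mdl pi' m * sigLik P C mdl N nl eps sel (phaseOf N k) lam m =
     al * (Vm C mdl pi' m * Ll m) + be * (Vm C mdl pi' m * Lc m).
    by move=> m; rewrite sigE; ring.
  under eq_Rintegral => m _ do rewrite e.
  under [X in _ / X]eq_Rintegral => m _ do rewrite sigE.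
  rewrite RintegralD //; last 2 first.
    - apply: (iZ _ _ H%:R); [exact: mVL|exact: VL0H].
    - apply: (iZ _ _ H%:R); [exact: mVL|exact: VL0H].
  rewrite RintegralD //; last 2 first.
    - apply: (iZ _ _ 1); [exact: mLl|exact: Ll01].
    - apply: (iZ _ _ 1); [exact: mLc|exact: Lc01].
  rewrite (RintegralZl (f:=Ll)) // (RintegralZl (f:=Lc)) // (RintegralZl (f:=fun m => Vm C mdl pi' m * Ll m)) // (RintegralZl (f:=fun m => Vm C mdl pi' m * Lc m)) //.
pose ZEl := fine (\int[P]_(m in E) (Ll m)%:E)%E.
pose ZEc := fine (\int[P]_(m in E) (Lc m)%:E)%E.
pose r := ZEl / ZEc.
have hPE : hP = b2%:R * r.
  by rewrite /hP /halP -/hs eqxx.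
have Ll0 : forall m, 0 <= Ll m by move=> m; case/andP: (Ll01 m).
have Lc0 : forall m, 0 <= Lc m by move=> m; case/andP: (Lc01 m).
have /andP[ZEl0 ZElL] : 0 <= ZEl <= Zl := fine_sub_le E Ll0 iLl.
have /andP[ZEc0 ZEcC] : 0 <= ZEc <= Zc := fine_sub_le E Lc0 iLc.
have r0 : 0 <= r by apply: divr_ge0.
have hR : 0 < b0%:R * cH * hP * Zc.
  move: hreal.
  rewrite (_ : fine _ = Rintegral P setT (fun m => halSigP P C mdl N nl eps sel l lam m)) //.
  under eq_Rintegral => m _ do rewrite halE.
  by rewrite RintegralZl.
have hb0 : b0.
  by apply/negPn/negP => /negbTE hb; move: hR; rewrite hb mul0r mul0r mul0r ltxx.
have hb2 : b2.
  by apply/negPn/negP => /negbTE hb; move: hR; rewrite hPE hb mul0r mulr0 mul0r ltxx.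
move: hR; rewrite hPE hb0 hb2 mul1r mul1r => hR.
have Zc0' : 0 <= Zc := le_trans ZEc0 ZEcC.
have rZ0 : 0 < r * Zc.
  rewrite lt_neqAle (mulr_ge0 r0 Zc0') andbT; apply/eqP => h0.
  by move: hR; rewrite -mulrA -h0 mulr0 ltxx.
have cH0 : 0 < cH by move: hR; rewrite -mulrA pmulr_lgt0.
have rp : 0 < r.
  rewrite lt_neqAle r0 andbT; apply/eqP => h0; by move: rZ0; rewrite -h0 mul0r ltxx.
have Zc0 : 0 < Zc.
  rewrite lt_neqAle Zc0' andbT; apply/eqP => h0; by move: rZ0; rewrite -h0 mulr0 ltxx.
have ZElp : 0 < ZEl.
  rewrite lt_neqAle ZEl0 andbT; apply/eqP => h0; by move: rp; rewrite /r -h0 mul0r ltxx.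
have ZEcp : 0 < ZEc.
  rewrite lt_neqAle ZEc0 andbT; apply/eqP => h0; by move: rp; rewrite /r -h0 invr0 mulr0 ltxx.
have Zl0 : 0 < Zl := lt_le_trans ZElp ZElL.
have alE : al = (1 - n) * cH by rewrite /al hb0 hb2 mul1r.
have beE : be = n * cH * r by rewrite /be hb0 hPE hb2 !mul1r mulrA.
have n0 : 0 < n by rewrite /n invr_gt0 ltr0n.
have n1 : n <= 1 by rewrite /n invf_le1 ?ler1n ?ltr0n.
have al0 : 0 <= al by rewrite alE; apply: mulr_ge0; [lra|exact: ltW].
have D0 : 0 < al * Zl + be * Zc.
  apply: ltr_wpDl; first exact: mulr_ge0 (ltW Zl0).
  by rewrite beE -mulrA -mulrA; apply: mulr_gt0 => //; apply: mulr_gt0.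
have A0H : forall pi', 0 <= Af pi' <= H%:R * Zl.
  move=> pi'; apply/andP; split.
    by apply: Rintegral_ge0 => m _; case/andP: (VL0H pi' Ll Ll01 m).
  rewrite /Zl -RintegralZl //; apply: le_Rintegral => //.
    apply: (iZ _ _ 1); [exact: mLl|exact: Ll01].
  move=> m _; apply: ler_wpM2r; first exact: Ll0.
  by case/andP: (V0H pi' m).
have B0H : forall pi', 0 <= Bf pi' <= H%:R * Zc.
  move=> pi'; apply/andP; split.
    by apply: Rintegral_ge0 => m _; case/andP: (VL0H pi' Lc Lc01 m).
  rewrite /Zc -RintegralZl //; apply: le_Rintegral => //.
    apply: (iZ _ _ 1); [exact: mLc|exact: Lc01].
  move=> m _; apply: ler_wpM2r; first exact: Lc0.
  by case/andP: (V0H pi' m).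
have ineq : forall pi', al * Af pi' + be * Bf pi' <= al * Af pi + be * Bf pi.
  move=> pi'; move: hpi; rewrite inE => /forallP /(_ pi').
  by rewrite !postE ler_pM2r ?invr_gt0.
have canEq : forall pi', canE P mdl (Vm C mdl pi') setT lam = Af pi' / Zl by [].
have canPrq : canPr P mdl E cens = ZEc / Zc by [].
have aH : forall pi', Af pi' / Zl <= H%:R.
  by move=> pi'; rewrite ler_pdivrMr //; case/andP: (A0H pi').
have a0 : forall pi', 0 <= Af pi' / Zl.
  by move=> pi'; apply: divr_ge0; [case/andP: (A0H pi')|exact: ltW].
move: hgap; rewrite canPrq /gap_can.
under eq_bigr do rewrite canEq.
under [X in (_ - X)%E]eq_bigr do rewrite canEq.
set Mx := (\big[maxe/-oo]_(i in Pi) _)%E.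
set My := (\big[maxe/-oo]_(i in ~: Pi) _)%E.
have hMyge : ((Af pi / Zl)%:E <= My)%E.
  rewrite /My; apply: (le_bigmax_cond _ (fun i => (Af i / Zl)%:E)).
  by rewrite finset.in_setC hnot.
have hMyle : (My <= H%:R%:E)%E.
  by apply: bigmax_le => [|i _]; rewrite ?leNye // lee_fin aH.
have hMxle : (Mx <= H%:R%:E)%E.
  by apply: bigmax_le => [|i _]; rewrite ?leNye // lee_fin aH.
pose y := fine My.
have Ey : My = y%:E.
  rewrite /y fineK // fin_numElt; apply/andP; split.
    by apply: lt_le_trans hMyge; rewrite ltNyr.
  by apply: le_lt_trans hMyle _; rewrite ltry.
have y0 : 0 <= y by rewrite -lee_fin -Ey; apply: le_trans hMyge; rewrite lee_fin.
have yge : Af pi / Zl <= y by rewrite -lee_fin -Ey.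
have c0 : 0 < ((3 * H)%:R : R)^-1 by rewrite invr_gt0 ltr0n muln_gt0 HH.
have [N1|N2] : N = 1%N \/ (1 < N)%N.
  case: (ltngtP N 1) => [h|h|h]; [by move: h hN; rewrite ltnS leqn0 => /eqP ->|by right|by left].
-
  have nE : n = 1 by rewrite /n N1 invr1.
  clearbody Mx My y.
  move=> hg0.
  have [x Ex] : exists x, Mx = x%:E.
    case: Mx hMxle hg0 => [x _ _|hx _|_ hg]; [by exists x|by move: hx; rewrite leye_eq|exfalso].
    move: hg; rewrite Ey [(-oo - _)%E](_ : _ = -oo%E) //.
    by rewrite gt0_muleNy ?lte_fin ?divr_gt0 // gt0_mulNye ?lte_fin // leeNy_eq.
  have hx := hMxle; rewrite Ex in hx.
  move: hg0; rewrite Ex Ey -EFinB -!EFinM lee_fin -/n nE => hg.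
  rewrite lee_fin in hx.
  apply: (@end1 R (ZEc / Zc) (x - y) H%:R) => //.
  + by apply: divr_gt0.
  + by rewrite ler_pdivrMr // mul1r.
  + lra.
  + by rewrite ltr0n.
  + by move: hg; rewrite natrM.
-
  have n2 : n <= 2^-1.
    rewrite /n lef_pV2 ?posrE ?ltr0n //; by rewrite (ler_nat R 2 N).
  have nl1 : n < 1 by lra.
  pose b := Af pi / Zl + n * r * H%:R * Zc / ((1 - n) * Zl).
  have hMxb : (Mx <= b%:E)%E.
    apply: bigmax_le => [|i _]; rewrite ?leNye // lee_fin.
    apply: (@step_bound R n r cH (Af i) (Af pi) (Bf i) (Bf pi) H%:R Zc Zl) => //.
    + by case/andP: (B0H i).
    + by case/andP: (B0H pi).
    + by have := ineq i; rewrite alE beE.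
  clearbody Mx My y.
  move=> hg0.
  have [x Ex] : exists x, Mx = x%:E.
    case: Mx hMxle hg0 hMxb => [x _ _ _|hx _ _|_ hg _]; [by exists x|by move: hx; rewrite leye_eq|exfalso].
    move: hg; rewrite Ey [(-oo - _)%E](_ : _ = -oo%E) //.
    by rewrite gt0_muleNy ?lte_fin ?divr_gt0 // gt0_mulNye ?lte_fin // leeNy_eq.
  have hxb := hMxb; rewrite Ex in hxb.
  move: hg0; rewrite Ex Ey -EFinB -!EFinM lee_fin -/n => hg.
  rewrite lee_fin in hxb.
  apply: (@end2 R n ZEl Zl ZEc Zc H%:R (x - y)) => //.
  + by rewrite ltr0n.
  + rewrite /b /r in hxb; lra.
  + by move: hg; rewrite natrM.
Qed.
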